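(* Let $n\ge 1$ and let $f_1,\dots,f_n\in\mathcal{B}_c$. Let $X=(X_1,\dots,X_n)$ be a random vector in $\mathbb{R}^n$ (the $X_i$ possibly dependent) such that $P(|X_i|\ge u)\le f_i(u)$ for all $u\ge 0$ and all $i$. Let $g:\mathbb{R}^n\to\mathbb{R}$ be continuous, even in each coordinate, and such that for each $i$ and each fixed choice of the other $n-1$ coordinates, $g$ is strictly increasing in the $i$-th coordinate on $[0,\infty)$. Define $h(s)=g\big(f_1^{-1}(s),\dots,f_n^{-1}(s)\big)$ for $s\in(0,1]$, and suppose $\lim_{s\downarrow 0}h(s)=\infty$. Then for all $t\ge h(1)$, $$P(g(X)\ge t)\le n\,h^{-1}(t).$$ Furthermore, if $f_1(0)=\cdots=f_n(0)=:c$, then with $h$ defined by the same formula on $(0,c]$, the inequality $P(g(X)\ge t)\le n\,h^{-1}(t)$ holds for all $t\ge g(\mathbf{0})$.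
   Context: $\mathcal{B}_c$ is the set of functions $f:[0,\infty)\to(0,\infty)$ that are continuous, strictly decreasing, satisfy $f(0)\ge 1$ and $\lim_{u\to\infty}f(u)=0$; $f_i^{-1}$ denotes the inverse function of $f_i$ (defined on $(0,f_i(0)]$). Under the hypotheses, $h$ is continuous and strictly decreasing, so $h^{-1}(t)$ is the unique $s$ with $h(s)=t$. *)

(* Defs.v *)
From HB Require Import structures.
From mathcomp Require Import all_boot all_order all_algebra.
From mathcomp Require Import all_classical all_reals all_analysis.
Set Implicit Arguments. Unset Strict Implicit. Unset Printing Implicit Defensive.
Import Order.TTheory GRing.Theory Num.Theory.
Import numFieldNormedType.Exports.
Local Open Scope classical_set_scope.
Local Open Scope ring_scope.

(* The class B_c: f : [0,oo) -> (0,oo) continuous, strictly decreasing,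
   f 0 >= 1, f u -> 0 as u -> oo.  (f is given as a total function R -> R;
   only its values on [0,oo) matter.) *)
Definition Bc {R : realType} (f : R -> R) : Prop :=
  [/\ {within `[0, +oo[, continuous f},
      {in `[0, +oo[ &, forall x y, x < y -> f y < f x},
      (forall u, 0 <= u -> 0 < f u),
      1 <= f 0
    & f x @[x --> +oo] --> 0].

Definition finv {R : realType} (f : R -> R) (y : R) : R :=
  xget 0 [set u | 0 <= u /\ f u = y].

Definition inv_on {R : realType} (c : R) (h : R -> R) (t : R) : R :=
  xget 0 [set s | 0 < s <= c /\ h s = t].

Definition rowset {R : Type} {n : nat} (x : 'rV[R]_n) (i : 'I_n) (a : R) : 'rV[R]_n :=
  \row_j (if j == i then a else x ord0 j).

Definition hfun {R : realType} {n : nat} (g : 'rV[R]_n -> R) (f : 'I_n -> R -> R)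
  (s : R) : R := g (\row_i finv (f i) s).

(* Main.v *)
Require Import Defs.
From HB Require Import structures.
From mathcomp Require Import all_boot all_order all_algebra.
From mathcomp Require Import all_classical all_reals all_analysis.
Import Order.TTheory GRing.Theory Num.Theory.
Import numFieldNormedType.Exports.
Local Open Scope classical_set_scope.
Local Open Scope ring_scope.

Section G.
Variables (R : realType) (n : nat) (g : 'rV[R]_n -> R).
Hypothesis geven : forall x i, g (rowset x i (- x ord0 i)) = g x.
Hypothesis ginc : forall x i a b, 0 <= a -> a < b -> g (rowset x i a) < g (rowset x i b).

Lemma rowsetE (x : 'rV[R]_n) i a j : rowset x i a ord0 j = if j == i then a else x ord0 j.
Proof. by rewrite /rowset mxE. Qed.

Lemma rowset_id (x : 'rV[R]_n) i : rowset x i (x ord0 i) = x.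
Proof.
apply/rowP => j; rewrite rowsetE; case: eqP => [->|] //.
Qed.

Lemma rowset_rowset (x : 'rV[R]_n) i a b : rowset (rowset x i a) i b = rowset x i b.
Proof. by apply/rowP => j; rewrite !rowsetE; case: eqP. Qed.

Lemma gabs (x : 'rV[R]_n) i a : g (rowset x i a) = g (rowset x i `|a|).
Proof.
have [a0|a0] := leP 0 a; first by rewrite ger0_norm.
rewrite ltr0_norm // -(geven (rowset x i a) i) rowset_rowset rowsetE eqxx //.
Qed.

Lemma gstep (m : 'rV[R]_n) i a b : `|a| <= `|b| -> g (rowset m i a) <= g (rowset m i b).
Proof.
rewrite (gabs m i a) (gabs m i b) le_eqVlt => /orP[/eqP->//|ab].
by apply/ltW/ginc.
Qed.

Lemma gstep_lt (m : 'rV[R]_n) i a b : `|a| < `|b| -> g (rowset m i a) < g (rowset m i b).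
Proof. by rewrite (gabs m i a) (gabs m i b) => ab; apply/ginc. Qed.

Definition mix (x y : 'rV[R]_n) (k : nat) : 'rV[R]_n :=
  \row_j (if (j < k)%N then y ord0 j else x ord0 j).

Lemma gmono_gen (x y : 'rV[R]_n) :
  (forall i, `|x ord0 i| <= `|y ord0 i|) ->
  forall k, (k <= n)%N ->
    g x <= g (mix x y k) /\
    ((0 < k)%N -> (forall i, `|x ord0 i| < `|y ord0 i|) -> g x < g (mix x y k)).
Proof.
move=> hle; elim=> [|k IH] hk.
  have -> : mix x y 0 = x by apply/rowP => j; rewrite mxE.
  by split.
have hk' : (k < n)%N by [].
have [IH1 IH2] := IH (ltnW hk).
set i := Ordinal hk'.
have e1 : mix x y k = rowset (mix x y k) i (x ord0 i).
  by apply/rowP => j; rewrite rowsetE mxE; case: eqP => [->|]; rewrite //= ltnn.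
have e2 : mix x y k.+1 = rowset (mix x y k) i (y ord0 i).
  apply/rowP => j; rewrite rowsetE !mxE; case: eqP => [->|/eqP hj]; first by rewrite /= ltnSn.
  rewrite ltnS leq_eqVlt; suff -> : (nat_of_ord j == k) = false by [].
  by apply/negbTE; apply: contra hj => /eqP hj'; apply/eqP/val_inj.
have st : g (mix x y k) <= g (mix x y k.+1).
  by rewrite e2 {1}e1; apply: gstep.
split; first exact: le_trans st.
move=> _ hlt; clear IH; case: k IH1 IH2 hk hk' i e1 e2 st => [|k] IH1 IH2 hk hk' i e1 e2 st.
  by apply: (le_lt_trans IH1); rewrite e2 {1}e1; apply: gstep_lt.
by apply: (lt_le_trans (IH2 isT hlt)).
Qed.

Lemma gmono_le (x y : 'rV[R]_n) :
  (forall i, `|x ord0 i| <= `|y ord0 i|) -> g x <= g y.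
Proof.
move=> h; have [+ _] := @gmono_gen x y h n (leqnn n).
suff -> : mix x y n = y by [].
by apply/rowP => j; rewrite mxE ltn_ord.
Qed.

Lemma gmono_lt (x y : 'rV[R]_n) : (0 < n)%N ->
  (forall i, `|x ord0 i| < `|y ord0 i|) -> g x < g y.
Proof.
move=> n0 h; have [_ +] := @gmono_gen x y (fun i => ltW (h i)) n (leqnn n).
move=> /(_ n0 h).
suff -> : mix x y n = y by [].
by apply/rowP => j; rewrite mxE ltn_ord.
Qed.

End G.

Section Finv.
Variables (R : realType) (F : R -> R).
Hypothesis hF : Bc F.

Lemma Fdec {u v : R} : 0 <= u -> u < v -> F v < F u.
Proof.
case: hF => _ hd _ _ _ u0 uv; apply: hd => //; rewrite in_itv /= andbT //.
by apply: (le_trans u0 (ltW uv)).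
Qed.

Lemma Finj {u v : R} : 0 <= u -> 0 <= v -> F u = F v -> u = v.
Proof.
move=> u0 v0 e; case: (ltgtP u v) => // h.
  by have := Fdec u0 h; rewrite e ltxx.
by have := Fdec v0 h; rewrite e ltxx.
Qed.

Lemma finv_eq {v y : R} : 0 <= v -> F v = y -> Defs.finv F y = v.
Proof.
move=> v0 e.
have [] : [set u | 0 <= u /\ F u = y] (Defs.finv F y).
  by rewrite /Defs.finv; apply: xgetPex; exists v.
move=> w0 e2; apply: Finj => //; by rewrite e e2.
Qed.

Lemma finvK u : 0 <= u -> Defs.finv F (F u) = u.
Proof. by move=> u0; apply: finv_eq. Qed.

Lemma Fcont_seg x : {within `[0, x], continuous F}.
Proof.
case: hF => hc _ _ _ _; apply: continuous_subspaceW hc.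
by move=> z /=; rewrite !in_itv /= => /andP[-> _].
Qed.

Lemma finv_spec y : 0 < y <= F 0 -> 0 <= Defs.finv F y /\ F (Defs.finv F y) = y.
Proof.
case/andP=> y0 yF.
case: (hF) => _ _ _ _ hlim.
have : \forall x \near +oo, F x < y.
  by apply: (cvgr_lt 0 hlim).
case=> M [Mr HM].
set x := Num.max M 0 + 1.
have x0 : 0 <= x by rewrite /x addr_ge0 // le_max lexx orbT.
have Fx : F x < y.
  apply: HM; rewrite /x; apply: (@le_lt_trans _ _ (Num.max M 0)).
    by rewrite le_max lexx.
  by rewrite ltrDl.
have x0' : 0 < x by rewrite /x ltr_pwDr // le_max lexx orbT.
have Fx0 := Fdec (lexx 0) x0'.
have := @IVT R F 0 x y x0 (Fcont_seg x).
rewrite (min_idPr (ltW Fx0)) (max_idPl (ltW Fx0)).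
case; first by rewrite (ltW Fx) yF.
move=> c c0 Fc.
have c00 : 0 <= c by move: c0; rewrite in_itv /= => /andP[].
by rewrite (finv_eq c00 Fc).
Qed.

Lemma finv_lt (y1 y2 : R) : 0 < y1 -> y1 < y2 -> y2 <= F 0 ->
  Defs.finv F y2 < Defs.finv F y1.
Proof.
move=> y10 y12 y2F.
have [u10 Fu1] := finv_spec _ (andb_true_intro (conj y10 (ltW (lt_le_trans y12 y2F)))).
have [u20 Fu2] := finv_spec _ (andb_true_intro (conj (lt_trans y10 y12) y2F)).
case: (ltgtP (Defs.finv F y2) (Defs.finv F y1)) => // h.
  by have := Fdec u10 h; rewrite Fu1 Fu2 => /(lt_trans y12); rewrite ltxx.
by move: y12; rewrite -Fu1 -Fu2 h ltxx.
Qed.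

Lemma finv_cont a : 0 < a <= F 0 -> {within `[a, F 0], continuous (Defs.finv F)}.
Proof.
move=> ha; have [b0 Fb] := finv_spec _ ha.
have := @segment_can_ge_continuous R 0 (Defs.finv F a) F (Defs.finv F) b0 (Fcont_seg _).
rewrite Fb; apply.
by move=> u; rewrite in_itv /= => /andP[u0 _]; apply: finvK.
Qed.

End Finv.

Section H.
Variables (R : realType) (n : nat) (g : 'rV[R]_n -> R) (f : 'I_n -> R -> R) (c : R).
Hypothesis hn : (0 < n)%N.
Hypothesis hf : forall i, Bc (f i).
Hypothesis gc : continuous g.
Hypothesis geven : forall x i, g (rowset x i (- x ord0 i)) = g x.
Hypothesis ginc : forall x i a b, 0 <= a -> a < b -> g (rowset x i a) < g (rowset x i b).
Hypothesis c0 : 0 < c.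
Hypothesis hcf : forall i, c <= f i 0.

Definition uvec (s : R) : 'rV[R]_n := \row_i Defs.finv (f i) s.

Lemma uvec_spec s i : 0 < s <= c -> 0 <= uvec s ord0 i /\ f i (uvec s ord0 i) = s.
Proof.
case/andP => s0 sc; rewrite mxE; apply: (finv_spec _ _ (hf i)).
by rewrite s0 (le_trans sc (hcf i)).
Qed.

Lemma h_dec s1 s2 : 0 < s1 -> s1 < s2 -> s2 <= c -> hfun g f s2 < hfun g f s1.
Proof.
move=> s10 s12 s2c; rewrite /hfun; apply: (gmono_lt _ _ _ geven ginc _ _ hn) => i.
have [u1 _] := uvec_spec _ i (andb_true_intro (conj s10 (ltW (lt_le_trans s12 s2c)))).
have [u2 _] := uvec_spec _ i (andb_true_intro (conj (lt_trans s10 s12) s2c)).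
move: u1 u2; rewrite /uvec !mxE => u1 u2.
rewrite !ger0_norm //; apply: (finv_lt _ _ (hf i)) => //.
exact: le_trans s2c (hcf i).
Qed.

Lemma h_cont a : 0 < a -> a <= c -> {within `[a, c], continuous (hfun g f)}.
Proof.
move=> a0 ac.
have hj : forall j, {within `[a, c], continuous (Defs.finv (f j))}.
  move=> j; apply: (@continuous_subspaceW _ _ _ `[a, f j 0]).
    move=> z /=; rewrite !in_itv /= => /andP[-> zc].
    exact: le_trans zc (hcf j).
  apply: (finv_cont _ _ (hf j)); by rewrite a0 (le_trans ac (hcf j)).
move=> x.
change (hfun g f) with (g \o uvec).
have -> : from_subspace `[a, c] (g \o uvec) = g \o from_subspace `[a, c] uvec by [].
apply: continuous_comp; last exact: gc.
rewrite /continuous_at.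
apply/(@cvg_mx_entourageP R^o 1 n) => E entE.
apply: filter_forall => i; apply: filter_forall => j.
have H : \forall t \near x, E (Defs.finv (f j) x, Defs.finv (f j) t).
  exact: ((cvg_app_entourageP _ _ _).1 (hj j x) E entE).
move: H; apply: (@filterS _ _ (nbhs_filter x)) => s.
by rewrite /= !mxE inE.
Qed.

Lemma h_exists t : hfun g f c <= t -> (hfun g f s @[s --> 0^'+] --> +oo) ->
  exists s, (0 < s <= c) /\ hfun g f s = t.
Proof.
move=> hct hlim.
have [a [a0 ac ha]] : exists a, [/\ 0 < a, a <= c & t <= hfun g f a].
  near (0:R)^'+ => a.
  exists a; split.
  - by near: a; exact: nbhs_right_gt.
  - by near: a; exact: nbhs_right_le.
  - by near: a; exact: ((cvgryPge _).1 hlim t).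
have hca : hfun g f c <= hfun g f a by exact: le_trans hct ha.
have := @IVT R (hfun g f) a c t ac (h_cont a a0 ac).
rewrite (min_idPr hca) (max_idPl hca) hct ha => /(_ isT) [s sac hs].
exists s; split => //.
move: sac; rewrite in_itv /= => /andP[as' ->]; rewrite andbT.
exact: lt_le_trans a0 as'.
Unshelve. all: by end_near.
Qed.

Lemma inv_on_spec t : hfun g f c <= t -> (hfun g f s @[s --> 0^'+] --> +oo) ->
  (0 < inv_on c (hfun g f) t <= c) /\ hfun g f (inv_on c (hfun g f) t) = t.
Proof.
move=> hct hlim; have hex := h_exists t hct hlim.
have := xgetPex 0 hex; by [].
Qed.

End H.

Section Prob.
Variables (R : realType) (d : measure_display) (T : measurableType d)
  (P : probability T R) (n : nat) (f : 'I_n -> R -> R) (X : 'I_n -> {RV P >-> R})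
  (g : 'rV[R]_n -> R).
Hypothesis hn : (0 < n)%N.
Hypothesis hf : forall i, Bc (f i).
Hypothesis htail : forall i u, 0 <= u -> (P [set w | (u <= `|X i w|)%R] <= (f i u)%:E)%E.
Hypothesis gc : continuous g.
Hypothesis geven : forall x i, g (rowset x i (- x ord0 i)) = g x.
Hypothesis ginc : forall x i a b, 0 <= a -> a < b -> g (rowset x i a) < g (rowset x i b).

Lemma meas_ge i u : measurable [set w | u <= `|X i w|].
Proof.
have m := measurableT_comp (@measurable_realfun.normr_measurable R setT) (@measurable_funPT _ _ _ _ (X i))
  measurableT (measurable_itv `[u, +oo[).
rewrite setTI in m.
suff -> : [set w | u <= `|X i w|] = (Num.norm \o X i) @^-1` `[u, +oo[ by [].
by apply/seteqP; split => w /=; rewrite in_itv /= andbT.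
Qed.

Lemma meas_lt i u : measurable [set w | `|X i w| < u].
Proof.
have m := measurableT_comp (@measurable_realfun.normr_measurable R setT) (@measurable_funPT _ _ _ _ (X i))
  measurableT (measurable_itv `]-oo, u[).
rewrite setTI in m.
suff -> : [set w | `|X i w| < u] = (Num.norm \o X i) @^-1` `]-oo, u[ by [].
by apply/seteqP; split => w /=; rewrite in_itv /=.
Qed.

Definition Cq (t : R) (q : {ffun 'I_n -> rat}) : set T :=
  if g (\row_i ratr (q i)) < t then \bigcap_(i in [set: 'I_n]) [set w | `|X i w| < ratr (q i)]
  else set0.

Lemma meas_A t : measurable [set w | t <= g (\row_i X i w)].
Proof.
suff -> : [set w | t <= g (\row_i X i w)] = ~` \bigcup_q Cq t q.
  apply: measurableC; apply: countable_bigcupT_measurable; first exact: countableP.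
  move=> q; rewrite /Cq; case: ifP => _; last exact: measurable0.
  apply: fin_bigcap_measurable; first exact: finite_finset.
  move=> i _; exact: meas_lt.
apply/seteqP; split.
- move=> w /= tw [q _]; rewrite /Cq; case: ifP => [gq hq | _ []].
  have : g (\row_i X i w) <= g (\row_i ratr (q i)).
    apply: (gmono_le _ _ _ geven ginc) => i; rewrite !mxE.
    apply: ltW; apply: (lt_le_trans (hq i (I : [set: 'I_n] i))); exact: ler_norm.
  by move=> /(le_trans tw) /(lt_le_trans gq); rewrite ltxx.
- move=> w /= nU; rewrite leNgt; apply/negP => gXt; apply: nU.
  set y := \row_i `|X i w|.
  have gy : g y = g (\row_i X i w).
    apply/eqP; rewrite eq_le; apply/andP; split; apply: (gmono_le _ _ _ geven ginc) => i;
      by rewrite !mxE normr_id.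
  have : \forall z \near y, g z < t.
    by apply: (cvgr_lt (g y) (gc y)); rewrite gy.
  case/nbhs_ballP => e e0 he.
  have hex : forall i, exists q : rat, ratr q \in `]`|X i w|, `|X i w| + e[.
    by move=> i; apply: rat_in_itvoo; rewrite ltrDl.
  have [qf hqf] := choice hex.
  exists [ffun i => qf i] => //.
  rewrite /Cq ifT.
    move=> i _ /=; rewrite ffunE.
    by have := hqf i; rewrite in_itv /= => /andP[].
  apply: he; split => // i j; rewrite /ball /= !mxE ffunE ltr_distlC.
  have := hqf j; rewrite in_itv /= => /andP[h1 h2].
  rewrite h2 andbT; apply: lt_trans h1; by rewrite ltrBlDr ltrDl.
Qed.

Lemma mem_bigsetU (I : eqType) (r : seq I) (F : I -> set T) w i :
  i \in r -> F i w -> (\big[setU/set0]_(j <- r) F j) w.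
Proof.
elim: r => [//|a r IH]; rewrite in_cons big_cons => /orP[/eqP <- Fw|ir Fw].
  by left.
by right; apply: IH.
Qed.

Lemma union_bound (B : 'I_n -> set T) : (forall i, measurable (B i)) ->
  forall r : seq 'I_n,
  (P (\big[setU/set0]_(i <- r) B i) <= \sum_(i <- r) P (B i))%E.
Proof.
move=> mB; elim => [|a r IH]; first by rewrite !big_nil measure0.
rewrite !big_cons; apply: le_trans (measureU2 _ _ _) _ => //.
  exact: bigsetU_measurable.
exact: leeD (lexx _) IH.
Qed.

Lemma main_bound s t : 0 < s -> (forall i, s <= f i 0) ->
  g (\row_i Defs.finv (f i) s) = t ->
  (P [set w | (t <= g (\row_i X i w))%R] <= (n%:R * s)%:E)%E.
Proof.
move=> s0 sf gt.
have hu : forall i, 0 <= Defs.finv (f i) s /\ f i (Defs.finv (f i) s) = s.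
  by move=> i; apply: (finv_spec _ _ (hf i)); rewrite s0 sf.
set B := fun i => [set w | Defs.finv (f i) s <= `|X i w|].
have sub : [set w | t <= g (\row_i X i w)] `<=` \big[setU/set0]_(i <- index_enum 'I_n) B i.
  move=> w /= tw; apply: contrapT => nU.
  have hlt : forall i, `|X i w| < Defs.finv (f i) s.
    move=> i; rewrite ltNge; apply/negP => hi; apply: nU.
    by apply: (mem_bigsetU _ _ _ _ i) => //; rewrite mem_index_enum.
  have : g (\row_i X i w) < g (\row_i Defs.finv (f i) s).
    apply: (gmono_lt _ _ _ geven ginc _ _ hn) => i; rewrite !mxE.
    by rewrite (ger0_norm (hu i).1).
  by rewrite gt => /(le_lt_trans tw); rewrite ltxx.
apply: le_trans (le_measure _ _ _ sub) _.
- by rewrite inE; exact: meas_A.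
- by rewrite inE; apply: bigsetU_measurable => i _; exact: meas_ge.

have U := union_bound B (fun i => meas_ge i _) (index_enum 'I_n).
apply: (le_trans U).
have L : ((\sum_(i < n) P (B i))%R <= (\sum_(i < n) (s%:E))%R)%E.
  apply: (lee_sum (index_enum _)) => i _; have := htail i _ (hu i).1; by rewrite (hu i).2.
apply: (le_trans L).
by rewrite sumEFin sumr_const card_ord mulr_natl.
Qed.

End Prob.

Theorem theorem2 (R : realType) (d : measure_display) (T : measurableType d)
  (P : probability T R) (n : nat) (hn : (0 < n)%N)
  (f : 'I_n -> R -> R) (X : 'I_n -> {RV P >-> R}) (g : 'rV[R]_n -> R) :
  (forall i, Bc (f i)) ->
  (forall i u, 0 <= u -> (P [set w | (u <= `|X i w|)%R] <= (f i u)%:E)%E) ->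
  continuous g ->
  (forall x i, g (rowset x i (- x ord0 i)) = g x) ->
  (forall x i a b, 0 <= a -> a < b -> g (rowset x i a) < g (rowset x i b)) ->
  hfun g f s @[s --> 0^'+] --> +oo ->
  (forall t, hfun g f 1 <= t ->
     (P [set w | (t <= g (\row_i X i w))%R] <= ((n%:R * inv_on 1 (hfun g f) t)%R)%:E)%E)
  /\
  (forall c, (forall i, f i 0 = c) ->
     forall t, g 0 <= t ->
     (P [set w | (t <= g (\row_i X i w))%R] <= ((n%:R * inv_on c (hfun g f) t)%R)%:E)%E).
Proof.
move=> hf htail gc geven ginc hlim; split.
- move=> t ht.
  have c0 : (0:R) < 1 by [].
  have hcf : forall i, (1:R) <= f i 0 by move=> i; case: (hf i).
  have [/andP[s0 s1] hs] := inv_on_spec R n g f 1 hf gc c0 hcf t ht hlim.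
  apply: (main_bound R d T P n f X g hn hf htail gc geven ginc _ t s0) => //.
  by move=> i; apply: le_trans s1 (hcf i).
- move=> c hc t ht.
  have c0 : 0 < c.
    have [_ _ hp _ _] := hf (Ordinal hn); by rewrite -(hc (Ordinal hn)) hp.
  have hcf : forall i, c <= f i 0 by move=> i; rewrite hc.
  have hc0 : hfun g f c = g 0.
    rewrite /hfun; congr g; apply/rowP => i; rewrite !mxE -(hc i).
    exact: (finvK _ _ (hf i) 0 (lexx 0)).
  have hct : hfun g f c <= t by rewrite hc0.
  have [/andP[s0 s1] hs] := inv_on_spec R n g f c hf gc c0 hcf t hct hlim.
  apply: (main_bound R d T P n f X g hn hf htail gc geven ginc _ t s0) => //.
  by move=> i; apply: le_trans s1 (hcf i).
Qed.
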